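(* Let $(G,g)$ be an eight-dimensional semi-Riemannian Lie group with a subgroup $K\cong\mathrm{SU}(2)\times\mathrm{SL}_2(\mathbb R)$ generating a left-invariant conformal foliation $\mathcal F$ on $G$. Let $\mathfrak g=\mathfrak k\oplus\mathfrak m$ be the orthogonal decomposition of the Lie algebra of $G$ with $\mathfrak k=\mathfrak{su}(2)\times\mathfrak{sl}_2(\mathbb R)$, and let $\{A,B,C,R,S,T,X,Y\}$ be an orthonormal basis for $\mathfrak g$ such that $A,B,C$ span $\mathfrak{su}(2)$ and $R,S,T$ span $\mathfrak{sl}_2(\mathbb R)$, with $[A,B]=2C$, $[C,A]=2B$, $[B,C]=2A$, $[R,S]=2T$, $[T,R]=2S$, $[S,T]=-2R$. In this setting the brackets have the form $[A,X]=-b_{11}B-c_{11}C$, $[A,Y]=-b_{21}B-c_{21}C$, $[B,X]=b_{11}A-c_{12}C$, $[B,Y]=b_{21}A-c_{22}C$, $[C,X]=c_{11}A+c_{12}B$, $[C,Y]=c_{21}A+c_{22}B$, $[R,X]=s_{14}S+t_{14}T$, $[R,Y]=s_{24}S+t_{24}T$, $[S,X]=s_{14}R-t_{15}T$, $[S,Y]=s_{24}R-t_{25}T$, $[T,X]=t_{14}R+t_{15}S$, $[T,Y]=t_{24}R+t_{25}S$ for real numbers $b_{ij},c_{ij},s_{ij},t_{ij}$. Then the foliation $\mathcal F$ is both semi-Riemannian and minimal. Moreover, $\mathcal F$ is totally geodesic if and only if all of the following hold: $$0=(\varepsilon_B-\varepsilon_A)b_{11}=(\varepsilon_B-\varepsilon_A)b_{21}=(\varepsilon_C-\varepsilon_A)c_{11}=(\varepsilon_C-\varepsilon_A)c_{21}=(\varepsilon_C-\varepsilon_B)c_{12}=(\varepsilon_C-\varepsilon_B)c_{22},$$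 $$0=(\varepsilon_S+\varepsilon_R)s_{14}=(\varepsilon_S+\varepsilon_R)s_{24}=(\varepsilon_T+\varepsilon_R)t_{14}=(\varepsilon_T+\varepsilon_R)t_{24}=(\varepsilon_T-\varepsilon_S)t_{15}=(\varepsilon_T-\varepsilon_S)t_{25}.$$
   Context: A semi-Riemannian Lie group $(G,g)$ is a Lie group with a left-invariant non-degenerate metric $g$ of arbitrary signature; its Lie algebra is identified with the left-invariant vector fields. $K$ generates the left-invariant foliation $\mathcal F$ by left translates of $K$, with tangent distribution $\mathcal V$ spanned by $\mathfrak k$ and orthogonal complement $\mathcal H$ spanned by $\mathfrak m$; $\mathcal V,\mathcal H$ also denote orthogonal projections. Orthonormal means $g(E_i,E_j)=\varepsilon_{E_i}\delta_{ij}$, $\varepsilon_{E_i}=g(E_i,E_i)\in\{\pm1\}$. With $\nabla$ the Levi-Civita connection: $B^{\mathcal H}(E,F)=\tfrac12\mathcal V(\nabla_EF+\nabla_FE)$ ($E,F\in\mathcal H$), $B^{\mathcal V}(E,F)=\tfrac12\mathcal H(\nabla_EF+\nabla_FE)$ ($E,F\in\mathcal V$). $\mathcal F$ is conformal if $B^{\mathcal H}=g\otimes V$ for some vector field $V$ in $\mathcal V$, semi-Riemannian if $B^{\mathcal H}=0$, minimal if $\sum_k\varepsilon_{V_k}B^{\mathcal V}(V_k,V_k)=0$ for an orthonormal basis $\{V_k\}$ of $\mathcal V$, and totally geodesic if $B^{\mathcal V}=0$. *)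

(* Defs.v *)
(* Lie-algebra-level model of a left-invariant semi-Riemannian
   metric on an 8-dimensional Lie group, in coordinates w.r.t. an orthonormal
   basis e_0..e_7 = A,B,C,R,S,T,X,Y. *)
From HB Require Import structures.
From mathcomp Require Import all_boot all_order all_algebra.
From mathcomp Require Import reals.
Set Implicit Arguments. Unset Strict Implicit. Unset Printing Implicit Defensive.
Import Order.TTheory GRing.Theory Num.Theory.
Local Open Scope ring_scope.

Definition iA : 'I_8 := @Ordinal 8 0 erefl.
Definition iB : 'I_8 := @Ordinal 8 1 erefl.
Definition iC : 'I_8 := @Ordinal 8 2 erefl.
Definition iR : 'I_8 := @Ordinal 8 3 erefl.
Definition iS : 'I_8 := @Ordinal 8 4 erefl.
Definition iT : 'I_8 := @Ordinal 8 5 erefl.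
Definition iX : 'I_8 := @Ordinal 8 6 erefl.
Definition iY : 'I_8 := @Ordinal 8 7 erefl.

Definition e (R : realType) (i : 'I_8) : 'rV[R]_8 := delta_mx 0 i.

Definition metric (R : realType) (eps : 'I_8 -> R) (u v : 'rV[R]_8) : R :=
  \sum_i eps i * u 0 i * v 0 i.

Definition signs (R : realType) (eps : 'I_8 -> R) : Prop :=
  forall i, eps i = 1 \/ eps i = -1.

Definition is_lie_bracket (R : realType) (br : 'rV[R]_8 -> 'rV[R]_8 -> 'rV[R]_8) : Prop :=
  (forall a u v w, br (a *: u + v) w = a *: br u w + br v w) /\
  (forall a u v w, br w (a *: u + v) = a *: br w u + br w v) /\
  (forall u v, br u v = - br v u) /\
  (forall u v w, br u (br v w) + br v (br w u) + br w (br u v) = 0).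

(* nabla is the Levi-Civita connection on left-invariant vector fields:
   torsion free and metric (g(v,w) is constant for left-invariant v, w). *)
Definition is_levi_civita (R : realType) (eps : 'I_8 -> R)
  (br nabla : 'rV[R]_8 -> 'rV[R]_8 -> 'rV[R]_8) : Prop :=
  (forall u v, nabla u v - nabla v u = br u v) /\
  (forall u v w, metric eps (nabla u v) w + metric eps v (nabla u w) = 0).

(* orthogonal projections onto V = k = span(e_0..e_5) and H = m = span(e_6,e_7) *)
Definition vproj (R : realType) (u : 'rV[R]_8) : 'rV[R]_8 :=
  \row_i (if (i < 6)%N then u 0 i else 0).
Definition hproj (R : realType) (u : 'rV[R]_8) : 'rV[R]_8 :=
  \row_i (if (6 <= i)%N then u 0 i else 0).

Definition inV (R : realType) (u : 'rV[R]_8) : Prop := hproj u = 0.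
Definition inH (R : realType) (u : 'rV[R]_8) : Prop := vproj u = 0.

Definition BH (R : realType) (nabla : 'rV[R]_8 -> 'rV[R]_8 -> 'rV[R]_8) (E F : 'rV[R]_8) :=
  2^-1 *: vproj (nabla E F + nabla F E).
Definition BV (R : realType) (nabla : 'rV[R]_8 -> 'rV[R]_8 -> 'rV[R]_8) (E F : 'rV[R]_8) :=
  2^-1 *: hproj (nabla E F + nabla F E).

Definition conformal_foliation (R : realType) (eps : 'I_8 -> R)
  (nabla : 'rV[R]_8 -> 'rV[R]_8 -> 'rV[R]_8) : Prop :=
  exists V0 : 'rV[R]_8, inV V0 /\
    forall E F, inH E -> inH F -> BH nabla E F = metric eps E F *: V0.

Definition semi_riemannian_foliation (R : realType)
  (nabla : 'rV[R]_8 -> 'rV[R]_8 -> 'rV[R]_8) : Prop :=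
  forall E F, inH E -> inH F -> BH nabla E F = 0.

(* trace of B^V w.r.t. the orthonormal basis e_0..e_5 of V *)
Definition minimal_foliation (R : realType) (eps : 'I_8 -> R)
  (nabla : 'rV[R]_8 -> 'rV[R]_8 -> 'rV[R]_8) : Prop :=
  \sum_(i < 8 | (i < 6)%N) eps i *: BV nabla (e R i) (e R i) = 0.

Definition totally_geodesic_foliation (R : realType)
  (nabla : 'rV[R]_8 -> 'rV[R]_8 -> 'rV[R]_8) : Prop :=
  forall E F, inV E -> inV F -> BV nabla E F = 0.

(* Main.v *)
Require Import Defs.
From HB Require Import structures.
From mathcomp Require Import all_boot all_order all_algebra.
From mathcomp Require Import reals.
Import Order.TTheory GRing.Theory Num.Theory.
Local Open Scope ring_scope.


From mathcomp Require Import ring lra.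

Lemma sum8 (V : zmodType) (f : 'I_8 -> V) :
  \sum_(i < 8) f i = f iA + f iB + f iC + f iR + f iS + f iT + f iX + f iY.
Proof.
rewrite !big_ord_recr big_ord0 /= add0r.
repeat f_equal; apply: val_inj; reflexivity.
Qed.

Lemma ord8 (j : 'I_8) : j = iA \/ j = iB \/ j = iC \/ j = iR \/ j = iS \/ j = iT \/ j = iX \/ j = iY.
Proof.
case: j => [[|[|[|[|[|[|[|[|n]]]]]]]] Hn] //;
 do ?[by left; apply: val_inj | right].
exact: val_inj.
Qed.

Section Aux.
Variable R : realType.
Variable eps : 'I_8 -> R.
Implicit Types u v w : 'rV[R]_8.

Lemma metricE u v : metric eps u v =
  eps iA * u 0 iA * v 0 iA + eps iB * u 0 iB * v 0 iB + eps iC * u 0 iC * v 0 iC +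
  eps iR * u 0 iR * v 0 iR + eps iS * u 0 iS * v 0 iS + eps iT * u 0 iT * v 0 iT +
  eps iX * u 0 iX * v 0 iX + eps iY * u 0 iY * v 0 iY.
Proof. by rewrite /metric sum8. Qed.

Lemma metricC u v : metric eps u v = metric eps v u.
Proof. rewrite !metricE; ring. Qed.

Lemma metricDr u v w : metric eps u (v + w) = metric eps u v + metric eps u w.
Proof. rewrite !metricE !mxE; ring. Qed.

Lemma metricDl u v w : metric eps (v + w) u = metric eps v u + metric eps w u.
Proof. rewrite !metricE !mxE; ring. Qed.

Lemma metricNr u v : metric eps u (- v) = - metric eps u v.
Proof. rewrite !metricE !mxE; ring. Qed.

Lemma metricZr u a v : metric eps u (a *: v) = a * metric eps u v.
Proof.
rewrite /metric mulr_sumr; apply: eq_bigr => i _; rewrite mxE; ring.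
Qed.

Lemma metric_e u k : metric eps u (e R k) = eps k * u 0 k.
Proof.
rewrite /metric (bigD1 k) //= big1 ?addr0 => [|i /negbTE ik].
  by rewrite /e mxE !eqxx /=; ring.
by rewrite /e mxE ik andbF mulr0.
Qed.

Lemma coordN (hs : signs eps) u k : u 0 k = eps k * metric eps u (e R k).
Proof.
rewrite metricE.
have [->|[->|[->|[->|[->|[->|[->|->]]]]]]] := ord8 k; rewrite !mxE /=;
 [case: (hs iA)|case: (hs iB)|case: (hs iC)|case: (hs iR)|case: (hs iS)|case: (hs iT)|case: (hs iX)|case: (hs iY)];
 move=> ->; ring.
Qed.

Lemma epsN0 (hs : signs eps) k : eps k != 0.
Proof. by case: (hs k) => ->; rewrite ?oppr_eq0 oner_eq0. Qed.

End Aux.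

Lemma brlin (R : realType) (br : 'rV[R]_8 -> 'rV[R]_8 -> 'rV[R]_8) :
  is_lie_bracket br ->
  [/\ (forall u v w, br (u + v) w = br u w + br v w),
      (forall a u w, br (a *: u) w = a *: br u w),
      (forall u v w, br w (u + v) = br w u + br w v) &
      (forall a u w, br w (a *: u) = a *: br w u)].
Proof.
case=> [L1 [L2 [L3 _]]].
have D1 : forall u v w, br (u + v) w = br u w + br v w.
  by move=> u v w; have := L1 1 u v w; rewrite !scale1r.
have D2 : forall u v w, br w (u + v) = br w u + br w v.
  by move=> u v w; have := L2 1 u v w; rewrite !scale1r.
have Z1 : forall w, br 0 w = 0.
  move=> w; have h := D1 0 0 w; rewrite addr0 in h.
  by apply: (addrI (br 0 w)); rewrite addr0 -h.
have Z2 : forall w, br w 0 = 0.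
  move=> w; have h := D2 0 0 w; rewrite addr0 in h.
  by apply: (addrI (br w 0)); rewrite addr0 -h.
split=> //.
- by move=> a u w; have := L1 a u 0 w; rewrite !addr0 Z1 addr0.
- by move=> a u w; have := L2 a u 0 w; rewrite !addr0 Z2 addr0.
Qed.

Lemma symN (R : realType) (eps : 'I_8 -> R) br nabla :
  is_lie_bracket br -> is_levi_civita eps br nabla ->
  forall U V W, metric eps (nabla U V + nabla V U) W =
     metric eps V (br W U) + metric eps U (br W V).
Proof.
move=> [_ [_ [AS _]]] [T M] U V W.
have h1 := M U V W. have h2 := M V U W. have h5 := M W U V.
have e1 : nabla U W = br U W + nabla W U by rewrite -T subrK.
have e2 : nabla V W = br V W + nabla W V by rewrite -T subrK.
have h3 : metric eps V (nabla U W) = metric eps V (br U W) + metric eps V (nabla W U)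
  by rewrite e1 metricDr.
have h4 : metric eps U (nabla V W) = metric eps U (br V W) + metric eps U (nabla W V)
  by rewrite e2 metricDr.
have h6 := @metricC _ eps V (nabla W U).
have h7 : metric eps V (br U W) = - metric eps V (br W U) by rewrite (AS U W) metricNr.
have h8 : metric eps U (br V W) = - metric eps U (br W V) by rewrite (AS V W) metricNr.
rewrite metricDl. lra.
Qed.

Lemma zeroH (R : realType) (E : 'rV[R]_8) : inH E -> forall j : 'I_8, (j < 6)%N -> E 0 j = 0.
Proof. by move=> hE j hj; move/rowP: hE => /(_ j); rewrite !mxE hj. Qed.

Lemma decH (R : realType) (E : 'rV[R]_8) : inH E ->
  E = E 0 iX *: e R iX + E 0 iY *: e R iY.
Proof.
move=> hE; have z : forall j : 'I_8, (j < 6)%N -> E 0 j = 0.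
  by move=> j hj; move/rowP: hE => /(_ j); rewrite !mxE hj.
apply/rowP => j; rewrite !mxE.
have [->|[->|[->|[->|[->|[->|[->|->]]]]]]] := ord8 j; rewrite /=; first [by rewrite z //; ring | ring].
Qed.

Lemma decV (R : realType) (E : 'rV[R]_8) : inV E ->
  E = E 0 iA *: e R iA + E 0 iB *: e R iB + E 0 iC *: e R iC +
      E 0 iR *: e R iR + E 0 iS *: e R iS + E 0 iT *: e R iT.
Proof.
move=> hE; have z : forall j : 'I_8, (6 <= j)%N -> E 0 j = 0.
  by move=> j hj; move/rowP: hE => /(_ j); rewrite !mxE hj.
apply/rowP => j; rewrite !mxE.
have [->|[->|[->|[->|[->|[->|[->|->]]]]]]] := ord8 j; rewrite /=; first [by rewrite z //; ring | ring].
Qed.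


Section Ent.
Variable R : realType.
Lemma entD (u v : 'rV[R]_8) j : (u + v) 0 j = u 0 j + v 0 j. Proof. by rewrite mxE. Qed.
Lemma entN (u : 'rV[R]_8) j : (- u) 0 j = - u 0 j. Proof. by rewrite mxE. Qed.
Lemma entZ a (u : 'rV[R]_8) j : (a *: u) 0 j = a * u 0 j. Proof. by rewrite mxE. Qed.
Lemma ent0 j : (0 : 'rV[R]_8) 0 j = 0. Proof. by rewrite mxE. Qed.
Lemma e_A_A : e R iA 0 iA = 1. Proof. by rewrite mxE. Qed.
Lemma e_A_B : e R iA 0 iB = 0. Proof. by rewrite mxE. Qed.
Lemma e_A_C : e R iA 0 iC = 0. Proof. by rewrite mxE. Qed.
Lemma e_A_R : e R iA 0 iR = 0. Proof. by rewrite mxE. Qed.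
Lemma e_A_S : e R iA 0 iS = 0. Proof. by rewrite mxE. Qed.
Lemma e_A_T : e R iA 0 iT = 0. Proof. by rewrite mxE. Qed.
Lemma e_A_X : e R iA 0 iX = 0. Proof. by rewrite mxE. Qed.
Lemma e_A_Y : e R iA 0 iY = 0. Proof. by rewrite mxE. Qed.
Lemma e_B_A : e R iB 0 iA = 0. Proof. by rewrite mxE. Qed.
Lemma e_B_B : e R iB 0 iB = 1. Proof. by rewrite mxE. Qed.
Lemma e_B_C : e R iB 0 iC = 0. Proof. by rewrite mxE. Qed.
Lemma e_B_R : e R iB 0 iR = 0. Proof. by rewrite mxE. Qed.
Lemma e_B_S : e R iB 0 iS = 0. Proof. by rewrite mxE. Qed.
Lemma e_B_T : e R iB 0 iT = 0. Proof. by rewrite mxE. Qed.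
Lemma e_B_X : e R iB 0 iX = 0. Proof. by rewrite mxE. Qed.
Lemma e_B_Y : e R iB 0 iY = 0. Proof. by rewrite mxE. Qed.
Lemma e_C_A : e R iC 0 iA = 0. Proof. by rewrite mxE. Qed.
Lemma e_C_B : e R iC 0 iB = 0. Proof. by rewrite mxE. Qed.
Lemma e_C_C : e R iC 0 iC = 1. Proof. by rewrite mxE. Qed.
Lemma e_C_R : e R iC 0 iR = 0. Proof. by rewrite mxE. Qed.
Lemma e_C_S : e R iC 0 iS = 0. Proof. by rewrite mxE. Qed.
Lemma e_C_T : e R iC 0 iT = 0. Proof. by rewrite mxE. Qed.
Lemma e_C_X : e R iC 0 iX = 0. Proof. by rewrite mxE. Qed.
Lemma e_C_Y : e R iC 0 iY = 0. Proof. by rewrite mxE. Qed.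
Lemma e_R_A : e R iR 0 iA = 0. Proof. by rewrite mxE. Qed.
Lemma e_R_B : e R iR 0 iB = 0. Proof. by rewrite mxE. Qed.
Lemma e_R_C : e R iR 0 iC = 0. Proof. by rewrite mxE. Qed.
Lemma e_R_R : e R iR 0 iR = 1. Proof. by rewrite mxE. Qed.
Lemma e_R_S : e R iR 0 iS = 0. Proof. by rewrite mxE. Qed.
Lemma e_R_T : e R iR 0 iT = 0. Proof. by rewrite mxE. Qed.
Lemma e_R_X : e R iR 0 iX = 0. Proof. by rewrite mxE. Qed.
Lemma e_R_Y : e R iR 0 iY = 0. Proof. by rewrite mxE. Qed.
Lemma e_S_A : e R iS 0 iA = 0. Proof. by rewrite mxE. Qed.
Lemma e_S_B : e R iS 0 iB = 0. Proof. by rewrite mxE. Qed.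
Lemma e_S_C : e R iS 0 iC = 0. Proof. by rewrite mxE. Qed.
Lemma e_S_R : e R iS 0 iR = 0. Proof. by rewrite mxE. Qed.
Lemma e_S_S : e R iS 0 iS = 1. Proof. by rewrite mxE. Qed.
Lemma e_S_T : e R iS 0 iT = 0. Proof. by rewrite mxE. Qed.
Lemma e_S_X : e R iS 0 iX = 0. Proof. by rewrite mxE. Qed.
Lemma e_S_Y : e R iS 0 iY = 0. Proof. by rewrite mxE. Qed.
Lemma e_T_A : e R iT 0 iA = 0. Proof. by rewrite mxE. Qed.
Lemma e_T_B : e R iT 0 iB = 0. Proof. by rewrite mxE. Qed.
Lemma e_T_C : e R iT 0 iC = 0. Proof. by rewrite mxE. Qed.
Lemma e_T_R : e R iT 0 iR = 0. Proof. by rewrite mxE. Qed.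
Lemma e_T_S : e R iT 0 iS = 0. Proof. by rewrite mxE. Qed.
Lemma e_T_T : e R iT 0 iT = 1. Proof. by rewrite mxE. Qed.
Lemma e_T_X : e R iT 0 iX = 0. Proof. by rewrite mxE. Qed.
Lemma e_T_Y : e R iT 0 iY = 0. Proof. by rewrite mxE. Qed.
Lemma e_X_A : e R iX 0 iA = 0. Proof. by rewrite mxE. Qed.
Lemma e_X_B : e R iX 0 iB = 0. Proof. by rewrite mxE. Qed.
Lemma e_X_C : e R iX 0 iC = 0. Proof. by rewrite mxE. Qed.
Lemma e_X_R : e R iX 0 iR = 0. Proof. by rewrite mxE. Qed.
Lemma e_X_S : e R iX 0 iS = 0. Proof. by rewrite mxE. Qed.
Lemma e_X_T : e R iX 0 iT = 0. Proof. by rewrite mxE. Qed.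
Lemma e_X_X : e R iX 0 iX = 1. Proof. by rewrite mxE. Qed.
Lemma e_X_Y : e R iX 0 iY = 0. Proof. by rewrite mxE. Qed.
Lemma e_Y_A : e R iY 0 iA = 0. Proof. by rewrite mxE. Qed.
Lemma e_Y_B : e R iY 0 iB = 0. Proof. by rewrite mxE. Qed.
Lemma e_Y_C : e R iY 0 iC = 0. Proof. by rewrite mxE. Qed.
Lemma e_Y_R : e R iY 0 iR = 0. Proof. by rewrite mxE. Qed.
Lemma e_Y_S : e R iY 0 iS = 0. Proof. by rewrite mxE. Qed.
Lemma e_Y_T : e R iY 0 iT = 0. Proof. by rewrite mxE. Qed.
Lemma e_Y_X : e R iY 0 iX = 0. Proof. by rewrite mxE. Qed.
Lemma e_Y_Y : e R iY 0 iY = 1. Proof. by rewrite mxE. Qed.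
End Ent.
Definition eval_e := (e_A_A, e_A_B, e_A_C, e_A_R, e_A_S, e_A_T, e_A_X, e_A_Y, e_B_A, e_B_B, e_B_C, e_B_R, e_B_S, e_B_T, e_B_X, e_B_Y, e_C_A, e_C_B, e_C_C, e_C_R, e_C_S, e_C_T, e_C_X, e_C_Y, e_R_A, e_R_B, e_R_C, e_R_R, e_R_S, e_R_T, e_R_X, e_R_Y, e_S_A, e_S_B, e_S_C, e_S_R, e_S_S, e_S_T, e_S_X, e_S_Y, e_T_A, e_T_B, e_T_C, e_T_R, e_T_S, e_T_T, e_T_X, e_T_Y, e_X_A, e_X_B, e_X_C, e_X_R, e_X_S, e_X_T, e_X_X, e_X_Y, e_Y_A, e_Y_B, e_Y_C, e_Y_R, e_Y_S, e_Y_T, e_Y_X, e_Y_Y).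

Opaque e.
Arguments brlin {R br}.
Arguments zeroH {R E}.
Arguments decH {R E}.
Arguments decV {R E}.
Arguments coordN {R eps}.
Arguments symN {R eps br nabla}.
Arguments epsN0 {R eps}.

Theorem theorem7p2 (R : realType) (eps : 'I_8 -> R)
  (br nabla : 'rV[R]_8 -> 'rV[R]_8 -> 'rV[R]_8)
  (b11 b21 c11 c21 c12 c22 s14 s24 t14 t24 t15 t25 : R) :
  signs eps ->
  is_lie_bracket br ->
  is_levi_civita eps br nabla ->
  (* k = su(2) x sl_2(R) *)
  br (e R iA) (e R iB) = 2 *: e R iC ->
  br (e R iC) (e R iA) = 2 *: e R iB ->
  br (e R iB) (e R iC) = 2 *: e R iA ->
  br (e R iR) (e R iS) = 2 *: e R iT ->
  br (e R iT) (e R iR) = 2 *: e R iS ->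
  br (e R iS) (e R iT) = - (2 *: e R iR) ->
  br (e R iA) (e R iR) = 0 -> br (e R iA) (e R iS) = 0 -> br (e R iA) (e R iT) = 0 ->
  br (e R iB) (e R iR) = 0 -> br (e R iB) (e R iS) = 0 -> br (e R iB) (e R iT) = 0 ->
  br (e R iC) (e R iR) = 0 -> br (e R iC) (e R iS) = 0 -> br (e R iC) (e R iT) = 0 ->
  (* the foliation generated by K is conformal *)
  conformal_foliation eps nabla ->
  (* form of the brackets [k, m] *)
  br (e R iA) (e R iX) = - (b11 *: e R iB) - c11 *: e R iC ->
  br (e R iA) (e R iY) = - (b21 *: e R iB) - c21 *: e R iC ->
  br (e R iB) (e R iX) = b11 *: e R iA - c12 *: e R iC ->
  br (e R iB) (e R iY) = b21 *: e R iA - c22 *: e R iC ->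
  br (e R iC) (e R iX) = c11 *: e R iA + c12 *: e R iB ->
  br (e R iC) (e R iY) = c21 *: e R iA + c22 *: e R iB ->
  br (e R iR) (e R iX) = s14 *: e R iS + t14 *: e R iT ->
  br (e R iR) (e R iY) = s24 *: e R iS + t24 *: e R iT ->
  br (e R iS) (e R iX) = s14 *: e R iR - t15 *: e R iT ->
  br (e R iS) (e R iY) = s24 *: e R iR - t25 *: e R iT ->
  br (e R iT) (e R iX) = t14 *: e R iR + t15 *: e R iS ->
  br (e R iT) (e R iY) = t24 *: e R iR + t25 *: e R iS ->
  [/\ semi_riemannian_foliation nabla,
      minimal_foliation eps nabla &
      (totally_geodesic_foliation nabla <->
        ((eps iB - eps iA) * b11 = 0 /\ (eps iB - eps iA) * b21 = 0 /\
         (eps iC - eps iA) * c11 = 0 /\ (eps iC - eps iA) * c21 = 0 /\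
         (eps iC - eps iB) * c12 = 0 /\ (eps iC - eps iB) * c22 = 0 /\
         (eps iS + eps iR) * s14 = 0 /\ (eps iS + eps iR) * s24 = 0 /\
         (eps iT + eps iR) * t14 = 0 /\ (eps iT + eps iR) * t24 = 0 /\
         (eps iT - eps iS) * t15 = 0 /\ (eps iT - eps iS) * t25 = 0))].

Proof.
move=> hs hL hLC hAB hCA hBC hRS hTR hST hAR hAS hAT hBR hBS hBT hCR hCS hCT _
  hAX hAY hBX hBY hCX hCY hRX hRY hSX hSY hTX hTY.
have [D1 Z1 D2 Z2] := brlin hL.
have AS : forall u v, br u v = - br v u by case: hL => [_ [_ [H _]]].
have NE : forall U V k, (nabla U V + nabla V U) 0 k =
   eps k * (metric eps V (br (e R k) U) + metric eps U (br (e R k) V)).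
  by move=> U V k; rewrite (coordN hs) (symN hL hLC).
have NE2 : forall U V k, nabla U V 0 k + nabla V U 0 k =
   eps k * (metric eps V (br (e R k) U) + metric eps U (br (e R k) V)).
  by move=> U V k; rewrite -NE mxE.
have semiL : forall (k : 'I_8) G H, (k < 6)%N -> inH G -> inH H -> metric eps H (br (e R k) G) = 0.
  move=> k G H hk hG hH; have z := zeroH hH.
  rewrite (decH hG) D2 !Z2; move: hk.
  have [->|[->|[->|[->|[->|[->|[->|->]]]]]]] := ord8 k => // _; rewrite ?hAX ?hAY ?hBX ?hBY ?hCX ?hCY ?hRX ?hRY ?hSX ?hSY ?hTX ?hTY !(metricDr, metricNr, metricZr, metric_e) !z //; ring.
have semi : semi_riemannian_foliation nabla.
  move=> E F hE hF; rewrite /BH.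
  suff -> : vproj (nabla E F + nabla F E) = 0 by rewrite scaler0.
  apply/rowP => j; rewrite !mxE.
  have [->|[->|[->|[->|[->|[->|[->|->]]]]]]] := ord8 j; rewrite /= ?mulr0 // NE2 !semiL //; ring.
have mini : minimal_foliation eps nabla.
  rewrite /minimal_foliation big1 // => i hi; rewrite /BV.
  suff -> : hproj (nabla (e R i) (e R i) + nabla (e R i) (e R i)) = 0 by rewrite !scaler0.
  apply/rowP => j; rewrite [LHS]mxE ent0.
  move: hi; have [->|[->|[->|[->|[->|[->|[->|->]]]]]]] := ord8 i => // _;
  have [->|[->|[->|[->|[->|[->|[->|->]]]]]]] := ord8 j; rewrite /= ?mulr0 // ?NE;
  rewrite ?(AS (e R iX)) ?(AS (e R iY)) ?hAX ?hAY ?hBX ?hBY ?hCX ?hCY ?hRX ?hRY ?hSX ?hSY ?hTX ?hTY !(metricDr, metricNr, metricZr, metric_e) !eval_e; ring.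
pose QXe := fun E F : 'rV[R]_8 => (eps iB - eps iA) * b11 * (E 0 iA * F 0 iB + E 0 iB * F 0 iA) + (eps iC - eps iA) * c11 * (E 0 iA * F 0 iC + E 0 iC * F 0 iA) + (eps iC - eps iB) * c12 * (E 0 iB * F 0 iC + E 0 iC * F 0 iB) - (eps iS + eps iR) * s14 * (E 0 iR * F 0 iS + E 0 iS * F 0 iR) - (eps iT + eps iR) * t14 * (E 0 iR * F 0 iT + E 0 iT * F 0 iR) + (eps iT - eps iS) * t15 * (E 0 iS * F 0 iT + E 0 iT * F 0 iS).
pose QYe := fun E F : 'rV[R]_8 => (eps iB - eps iA) * b21 * (E 0 iA * F 0 iB + E 0 iB * F 0 iA) + (eps iC - eps iA) * c21 * (E 0 iA * F 0 iC + E 0 iC * F 0 iA) + (eps iC - eps iB) * c22 * (E 0 iB * F 0 iC + E 0 iC * F 0 iB) - (eps iS + eps iR) * s24 * (E 0 iR * F 0 iS + E 0 iS * F 0 iR) - (eps iT + eps iR) * t24 * (E 0 iR * F 0 iT + E 0 iT * F 0 iR) + (eps iT - eps iS) * t25 * (E 0 iS * F 0 iT + E 0 iT * F 0 iS).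
have QXv : forall E F, inV E -> inV F ->
   metric eps F (br (e R iX) E) + metric eps E (br (e R iX) F) = QXe E F.
  move=> E F hE hF; rewrite /QXe (AS (e R iX) E) (AS (e R iX) F) {1}(decV hE) {2}(decV hF).
  rewrite !D1 !Z1 ?hAX ?hAY ?hBX ?hBY ?hCX ?hCY ?hRX ?hRY ?hSX ?hSY ?hTX ?hTY !(metricDr, metricNr, metricZr, metric_e); ring.
have QYv : forall E F, inV E -> inV F ->
   metric eps F (br (e R iY) E) + metric eps E (br (e R iY) F) = QYe E F.
  move=> E F hE hF; rewrite /QYe (AS (e R iY) E) (AS (e R iY) F) {1}(decV hE) {2}(decV hF).
  rewrite !D1 !Z1 ?hAX ?hAY ?hBX ?hBY ?hCX ?hCY ?hRX ?hRY ?hSX ?hSY ?hTX ?hTY !(metricDr, metricNr, metricZr, metric_e); ring.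
have half : forall x k, 2^-1 * (eps k * x) = 0 -> x = 0.
  move=> x k /eqP; rewrite !mulf_eq0 invr_eq0 pnatr_eq0 /= (negbTE (epsN0 hs k)) /=.
  by move/eqP.
have TG : forall E F, inV E -> inV F -> (BV nabla E F = 0 <-> QXe E F = 0 /\ QYe E F = 0).
  move=> E F hE hF; rewrite /BV; split.
  - move=> h; have hx := congr1 (fun M : 'rV[R]_8 => M 0 iX) h.
    have hy := congr1 (fun M : 'rV[R]_8 => M 0 iY) h.
    rewrite /= !mxE /= NE2 in hx; rewrite /= !mxE /= NE2 in hy.
    rewrite QXv // in hx; rewrite QYv // in hy.
    by split; [exact: (half _ _ hx) | exact: (half _ _ hy)].
  - move=> [qx qy]; apply/rowP => j; rewrite !mxE.
    have [->|[->|[->|[->|[->|[->|[->|->]]]]]]] := ord8 j; rewrite /= ?mulr0 //; rewrite NE2 ?QXv ?QYv // ?qx ?qy; ring.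
have inVe : forall i : 'I_8, (i < 6)%N -> inV (e R i).
  move=> i hi; apply/rowP => j; rewrite [LHS]mxE ent0.
  by move: hi; have [->|[->|[->|[->|[->|[->|[->|->]]]]]]] := ord8 i => // _; have [->|[->|[->|[->|[->|[->|[->|->]]]]]]] := ord8 j; rewrite /= ?eval_e.
split => //; split.
- move=> tg.
  have key : forall E F, inV E -> inV F -> QXe E F = 0 /\ QYe E F = 0.
    by move=> E F hE hF; apply/TG => //; exact: tg.
  have [x1 y1] := key (e R iA) (e R iB) (inVe iA erefl) (inVe iB erefl).
  have [x2 y2] := key (e R iA) (e R iC) (inVe iA erefl) (inVe iC erefl).
  have [x3 y3] := key (e R iB) (e R iC) (inVe iB erefl) (inVe iC erefl).
  have [x4 y4] := key (e R iR) (e R iS) (inVe iR erefl) (inVe iS erefl).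
  have [x5 y5] := key (e R iR) (e R iT) (inVe iR erefl) (inVe iT erefl).
  have [x6 y6] := key (e R iS) (e R iT) (inVe iS erefl) (inVe iT erefl).
  rewrite /QXe /QYe !eval_e in x1 y1 x2 y2 x3 y3 x4 y4 x5 y5 x6 y6.
  repeat split;
  [ solve [apply: (etrans _ x1); ring | apply: oppr_inj; rewrite oppr0; apply: (etrans _ x1); ring]
  | solve [apply: (etrans _ y1); ring | apply: oppr_inj; rewrite oppr0; apply: (etrans _ y1); ring]
  | solve [apply: (etrans _ x2); ring | apply: oppr_inj; rewrite oppr0; apply: (etrans _ x2); ring]
  | solve [apply: (etrans _ y2); ring | apply: oppr_inj; rewrite oppr0; apply: (etrans _ y2); ring]
  | solve [apply: (etrans _ x3); ring | apply: oppr_inj; rewrite oppr0; apply: (etrans _ x3); ring]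
  | solve [apply: (etrans _ y3); ring | apply: oppr_inj; rewrite oppr0; apply: (etrans _ y3); ring]
  | solve [apply: (etrans _ x4); ring | apply: oppr_inj; rewrite oppr0; apply: (etrans _ x4); ring]
  | solve [apply: (etrans _ y4); ring | apply: oppr_inj; rewrite oppr0; apply: (etrans _ y4); ring]
  | solve [apply: (etrans _ x5); ring | apply: oppr_inj; rewrite oppr0; apply: (etrans _ x5); ring]
  | solve [apply: (etrans _ y5); ring | apply: oppr_inj; rewrite oppr0; apply: (etrans _ y5); ring]
  | solve [apply: (etrans _ x6); ring | apply: oppr_inj; rewrite oppr0; apply: (etrans _ x6); ring]
  | solve [apply: (etrans _ y6); ring | apply: oppr_inj; rewrite oppr0; apply: (etrans _ y6); ring]].
- move=> [h1 [h2 [h3 [h4 [h5 [h6 [h7 [h8 [h9 [h10 [h11 h12]]]]]]]]]]] E F hE hF.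
  apply/TG => //; rewrite /QXe /QYe /=.
  rewrite h1 h2 h3 h4 h5 h6 h7 h8 h9 h10 h11 h12; split; ring.
Qed.
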